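(* Suppose RLSVI (as in the context) is applied with parameters $(\lambda,v,\bar\theta)$ with $v/\lambda=\beta\geq 2$, $v=H^2$ and $\bar\theta = H\mathbf{1}$ (all entries equal to $H$). Then for every $L\in\mathbb{N}$, \[ \mathbb{E}\Big[\max_{\ell\le L,\ t<H}\|V_{Q_{\ell,t+1}}\|_\infty\Big] \leq 2H + H^2\sqrt{\log(1+|\mathcal{X}||\mathcal{A}|HL)}. \]
   Context: Setting: episodic MDP with finite state set $\mathcal{X}$, finite action set $\mathcal{A}$, horizon $H$; in episode $k$ and period $t\in\{0,\dots,H-1\}$ the agent is in $x^k_t$, takes $a^k_t$ and observes an outcome $(r^k_{t+1},x^k_{t+1})\in\{0,1\}\times\mathcal{X}$ (rewards in $\{0,1\}$). RLSVI with parameters $\bar\theta$, $v,\lambda>0$: $D_{\ell-1}(t,x,a)$ is the multiset of outcomes from episodes $k<\ell$ with $x^k_t=x,a^k_t=a$, $n_\ell(t,x,a)$ its size, $\sigma^2_\ell(t,x,a) = (1/\lambda+n_\ell(t,x,a)/v)^{-1}$, $w_\ell(t,x,a)=\sigma_\ell(t,x,a)\xi_{\ell,t,x,a}$ with $\xi$'s i.i.d. standard normal independent of everything else; \[F_{\ell,t}Q(x,a) = \sigma^2_\ell(t,x,a)\Big(\frac{\bar\theta_{t,x,a}}{\lambda}+\frac1v\sum_{(r,x')\in D_{\ell-1}(t,x,a)}\big(r+\max_{a'}Q(x',a')\big)\Big)+w_\ell(t,x,a);\] $Q_{\ell,H}=0$, $Q_{\ell,t}=F_{\ell,t}Q_{\ell,t+1}$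 for $t<H$; actions are greedy w.r.t. $Q_{\ell,t}$. For $Q\in\mathbb{R}^{\mathcal{X}\times\mathcal{A}}$, $V_Q(r,x') = r+\max_{a'}Q(x',a')$ is a function on $\{0,1\}\times\mathcal{X}$ and $\|\cdot\|_\infty$ is its sup norm. *)

(* Defs.v *)
From HB Require Import structures.
From mathcomp Require Import all_boot all_order all_algebra.
From mathcomp Require Import all_classical all_reals all_analysis.
From mathcomp Require Import normal_distribution.

Set Implicit Arguments.
Unset Strict Implicit.
Unset Printing Implicit Defensive.
Import Order.TTheory GRing.Theory Num.Theory.

Local Open Scope classical_set_scope.
Local Open Scope ring_scope.

Definition mutually_independent {d} {T : measurableType d} {R : realType}
    (P : probability T R) (I : eqType) (E : I -> set (set T)) : Prop :=
  forall (J : seq I) (B : I -> set T), uniq J ->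
    (forall i, i \in J -> E i (B i)) ->
    P (\big[setI/setT]_(i <- J) B i) = (\big[*%E/1%E]_(i <- J) P (B i))%E.

(* outcome (r, x') with r in {0,1} (encoded as bool) *)
Definition outcome (X : finType) := (bool * X)%type.
(* one transition of an episode: (x_t, a_t, (r_{t+1}, x_{t+1})) *)
Definition step (X A : finType) := (X * A * outcome X)%type.
(* an episode: period t |-> transition at period t (only t < H is used) *)
Definition episode (X A : finType) := nat -> step X A.

Definition maxA {R : realType} {A : finType} (f : A -> R) : R :=
  match [pick a : A] with
  | Some a0 => \big[Num.max/f a0]_(a : A) f a
  | None => 0
  end.

Definition VQ {R : realType} {X A : finType} (Q : X -> A -> R) (o : outcome X) : R :=
  (o.1)%:R + maxA (Q o.2).

Definition supnormV {R : realType} {X A : finType} (Q : X -> A -> R) : R :=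
  \big[Num.max/0]_(o : outcome X) `|VQ Q o|.

Definition Dset {X A : finType} (hist : seq (episode X A)) (t : nat) (x : X) (a : A)
  : seq (outcome X) :=
  [seq (e t).2 | e <- hist & ((e t).1.1 == x) && ((e t).1.2 == a)].

(* the operator F_{l,t} applied to Q, with noise xi_l (standard normals)
   and prior mean thetabar *)
Definition Fop {R : realType} {X A : finType} (lam v : R) (thetabar : nat -> X -> A -> R)
    (hist : seq (episode X A)) (xil : nat -> X -> A -> R) (t : nat)
    (Q : X -> A -> R) : X -> A -> R :=
  fun x a =>
    let D := Dset hist t x a in
    let s2 := (lam^-1 + (size D)%:R / v)^-1 in
    s2 * (thetabar t x a / lam + v^-1 * \sum_(o <- D) VQ Q o)
    + Num.sqrt s2 * xil t x a.

(* Qrev k = Q_{H-k}:  Q_H = 0,  Q_t = F_t Q_{t+1} *)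
Fixpoint Qrev {R : realType} {X A : finType} (H : nat) (lam v : R)
    (thetabar : nat -> X -> A -> R) (hist : seq (episode X A))
    (xil : nat -> X -> A -> R) (k : nat) : X -> A -> R :=
  match k with
  | 0 => fun _ _ => 0
  | k'.+1 => Fop lam v thetabar hist xil (H - k'.+1)
               (Qrev H lam v thetabar hist xil k')
  end.

(* Q_{l,t} computed from the data hist = episodes 1..l-1 and noise xil = xi_l *)
Definition Qfun {R : realType} {X A : finType} (H : nat) (lam v : R)
    (thetabar : nat -> X -> A -> R) (hist : seq (episode X A))
    (xil : nat -> X -> A -> R) (t : nat) : X -> A -> R :=
  Qrev H lam v thetabar hist xil (H - t).

(* state at period t of an episode run greedily w.r.t. Q, starting at x0,
   where the environment answers (t, x, a) with outcome Yl t x a *)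
Fixpoint run_state {R : realType} {X A : finType} (greedy : (A -> R) -> A)
    (Q : nat -> X -> A -> R) (Yl : nat -> X -> A -> outcome X) (x0 : X)
    (t : nat) : X :=
  match t with
  | 0 => x0
  | t'.+1 => let xt := run_state greedy Q Yl x0 t' in
             (Yl t' xt (greedy (Q t' xt))).2
  end.

Definition run_episode {R : realType} {X A : finType} (greedy : (A -> R) -> A)
    (Q : nat -> X -> A -> R) (Yl : nat -> X -> A -> outcome X) (x0 : X)
    : episode X A :=
  fun t => let xt := run_state greedy Q Yl x0 t in
           let act := greedy (Q t xt) in
           (xt, act, Yl t xt act).

(* history of episodes 1..m (episodes are numbered from 1) *)
Fixpoint history {R : realType} {X A : finType} (H : nat) (lam v : R)
    (thetabar : nat -> X -> A -> R) (greedy : (A -> R) -> A)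
    (xi : nat -> nat -> X -> A -> R) (Y : nat -> nat -> X -> A -> outcome X)
    (X0 : nat -> X) (m : nat) : seq (episode X A) :=
  match m with
  | 0 => [::]
  | m'.+1 =>
      let h := history H lam v thetabar greedy xi Y X0 m' in
      rcons h (run_episode greedy (Qfun H lam v thetabar h (xi m'.+1))
                 (Y m'.+1) (X0 m'.+1))
  end.

Definition RLSVI_Q {R : realType} {X A : finType} (H : nat) (lam v : R)
    (thetabar : nat -> X -> A -> R) (greedy : (A -> R) -> A)
    (xi : nat -> nat -> X -> A -> R) (Y : nat -> nat -> X -> A -> outcome X)
    (X0 : nat -> X) (l t : nat) : X -> A -> R :=
  Qfun H lam v thetabar (history H lam v thetabar greedy xi Y X0 l.-1) (xi l) t.

(* Main.v *)
Require Import Defs.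
From HB Require Import structures.
From mathcomp Require Import all_boot all_order all_algebra.
From mathcomp Require Import all_classical all_reals all_analysis.
From mathcomp Require Import normal_distribution measurable_realfun.
Import Order.TTheory GRing.Theory Num.Theory.
Local Open Scope classical_set_scope.
Local Open Scope ring_scope.
Set Implicit Arguments.
Unset Strict Implicit.
Unset Printing Implicit Defensive.
Import HBNNSimple.
From mathcomp Require Import ring lra zify.
Section density.
Local Open Scope ereal_scope.
Context d (T : measurableType d) (R : realType).
Variables (mu nu : {measure set T -> \bar R}) (g : T -> R).
Hypotheses (mg : measurable_fun setT g) (g0 : forall x, (0 <= g x)%R)
  (hnu : forall A, measurable A -> nu A = \int[mu]_(x in A) (g x)%:E).

Let mEg : measurable_fun setT (EFin \o g : T -> \bar R).
Proof. exact/measurable_EFinP. Qed.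

Let indic_g (A : set T) (mA : measurable A) :
  \int[mu]_x ((\1_A x)%:E * (g x)%:E) = nu A.
Proof.
rewrite hnu // [RHS]integral_mkcond; apply: eq_integral => x _.
rewrite /patch indicE; case: (x \in A) => /=; by rewrite ?mul1e ?mul0e.
Qed.

Let dens_nnsfun (h : {nnsfun T >-> R}) :
  \int[nu]_x (h x)%:E = \int[mu]_x ((h x)%:E * (g x)%:E).
Proof.
under [LHS]eq_integral => x _ do rewrite fimfunE -fsumEFin//.
rewrite [LHS]ge0_integral_fsum//; last 2 first.
  - by move=> r; exact/measurable_EFinP/measurableT_comp.
  - by move=> n x _; rewrite EFinM nnfun_muleindic_ge0.
under [RHS]eq_integral.
  move=> x _; rewrite fimfunE -fsumEFin// ge0_mule_fsuml; last first.
    by move=> r; rewrite EFinM nnfun_muleindic_ge0.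
  over.
rewrite [RHS]ge0_integral_fsum//; last 2 first.
  - move=> r; apply: emeasurable_funM; last exact: mEg.
    by apply/measurable_EFinP; do 2 apply/measurableT_comp => //.
  - move=> n x _; apply: mule_ge0; last by rewrite lee_fin.
    by rewrite EFinM nnfun_muleindic_ge0.
apply: eq_fsbigr => r _.
have [r0|r0] := leP 0%R r; last first.
  rewrite preimage_nnfun0// indic0.
  rewrite integral0_eq; last by move=> x _; rewrite /= mulr0.
  by rewrite integral0_eq// => x _; rewrite /= mulr0 mul0e.
rewrite integralZl_indic_nnsfun// integral_indic// setIT.
under eq_integral do rewrite EFinM -muleA.
rewrite ge0_integralZl//.
- by rewrite indic_g//; exact: measurable_funPTI.
- apply: emeasurable_funM => //.
  by apply/measurable_EFinP; apply/measurable_indic; exact: measurable_funPTI.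
- by move=> x _; rewrite mule_ge0// lee_fin.
Qed.

Lemma integral_density (f : T -> \bar R) :
  measurable_fun setT f -> (forall x, 0 <= f x) ->
  \int[nu]_x f x = \int[mu]_x (f x * (g x)%:E).
Proof.
move=> mf f0.
pose f_ := nnsfun_approx measurableT mf.
transitivity (limn (fun n => \int[nu]_x (f_ n x)%:E)).
  rewrite -monotone_convergence//=.
  - apply: eq_integral => ? /[!inE] xD; apply/esym/cvg_lim => //=.
    exact: cvg_nnsfun_approx.
  - by move=> n; exact/measurable_EFinP/measurable_funTS.
  - by move=> n ? _; rewrite lee_fin.
  - by move=> ? _ ? ? mn; rewrite lee_fin; exact/lefP/nd_nnsfun_approx.
rewrite (_ : (fun n => \int[nu]_x (f_ n x)%:E) =
   (fun n => \int[mu]_x ((f_ n x)%:E * (g x)%:E))); last first.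
  by apply/funext => n; exact: dens_nnsfun.
rewrite -monotone_convergence//=.
- apply: eq_integral => x _; apply/cvg_lim => //=.
  apply: cvgeMr; first by [].
  exact: cvg_nnsfun_approx.
- move=> n; apply: emeasurable_funM; last exact: mEg.
  by apply/measurable_EFinP/measurable_funTS.
- by move=> n x _; rewrite mule_ge0// lee_fin.
- move=> x _ m n mn; rewrite lee_wpmul2r ?lee_fin//.
  exact/lefP/nd_nnsfun_approx.
Qed.
End density.
Lemma normal_mgf (R : realType) (s : R) :
  (\int[normal_prob 0 1]_x (expR (s * x))%:E = (expR (s ^+ 2 / 2))%:E)%E.
Proof.
rewrite (@integral_density _ _ _ lebesgue_measure _ (normal_pdf 0 1)
   (measurable_normal_pdf 0 1) (normal_pdf_ge0 0 1)); last 3 first.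
- by [].
- apply/measurable_EFinP.
  apply: (measurableT_comp (f := expR) (g := fun x : R => s * x)).
    exact: measurable_expR.
  exact: mulrl_measurable.
- by move=> x; rewrite lee_fin expR_ge0.
transitivity (\int[lebesgue_measure]_x ((expR (s ^+ 2 / 2))%:E * (normal_pdf s 1 x)%:E))%E.
  apply: eq_integral => x _; rewrite -!EFinM; congr EFin.
  rewrite !normal_pdfE ?oner_neq0 //= /normal_fun mulrCA [RHS]mulrCA; congr (_ * _).
  rewrite -!expRD; congr expR; rewrite expr1n; field.
  by [].
transitivity ((expR (s ^+ 2 / 2))%:E * \int[lebesgue_measure]_x (normal_pdf s 1 x)%:E)%E; last first.
  by rewrite integral_normal_pdf mule1.
apply: ge0_integralZl => //.
- by apply/measurable_EFinP; exact: measurable_normal_pdf.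
- by move=> x _; rewrite lee_fin normal_pdf_ge0.
Qed.
Lemma mgf_rv (R : realType) d (T : measurableType d) (P : probability T R)
  (Z : T -> R) : measurable_fun setT Z ->
  (forall B : set R, measurable B -> P (Z @^-1` B) = normal_prob 0 1 B) ->
  forall s : R, (\int[P]_w (expR (s * Z w))%:E = (expR (s ^+ 2 / 2))%:E)%E.
Proof.
move=> mZ hZ s; rewrite -normal_mgf.
pose Z' : T -> measurableTypeR R := Z.
have mZ' : measurable_fun setT Z' by exact: mZ.
have mf : measurable_fun [set: measurableTypeR R] (fun x : measurableTypeR R => (expR (s * x))%:E).
  apply/measurable_EFinP.
  apply: (measurableT_comp (f := expR) (g := fun x : R => s * x)).
    exact: measurable_expR.
  exact: mulrl_measurable.
transitivity (\int[pushforward P Z']_x (expR (s * x))%:E)%E; last first.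
  apply: eq_measure_integral => A mA _; rewrite /pushforward.
  by apply: hZ; exact: mA.
rewrite ge0_integral_pushforward//.
Qed.
Lemma le_integral_nm d (T : measurableType d) (R : realType)
  (mu : {measure set T -> \bar R}) (f g : T -> \bar R) :
  (forall x, (0 <= f x)%E) -> (forall x, (f x <= g x)%E) ->
  (\int[mu]_x f x <= \int[mu]_x g x)%E.
Proof.
move=> f0 fg.
rewrite !ge0_integralE//; last by move=> x _; exact: (le_trans (f0 x) (fg x)).
apply: ereal_sup_le => _ [h hf <-]; exists h => //= x.
apply: (le_trans (hf x)).
by rewrite /patch /=; case: ifP => // _; exact: fg.
Qed.
Lemma key_ineq (R : realType) (a b H B Xi u q : R) :
  0 <= a -> a + b = 1 -> 0 <= b -> u ^+ 2 = a * q ^+ 2 -> 0 <= u -> 0 < q ->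
  0 <= Xi -> H + q * Xi <= B -> a * H + b * B + u * Xi <= B + q * Xi / 4.
Proof.
move=> a0 ab b0 uq u0 q0 X0 HB.
have -> : b = 1 - a by rewrite -ab addrC addKr.
have h1 : a * H + (1 - a) * B <= B - a * (q * Xi) by nra.
suff : u * Xi - a * (q * Xi) <= q * Xi / 4 by lra.
have h2 : q * (u * Xi - a * (q * Xi)) <= q * (q * Xi / 4).
  have -> : q * (u * Xi - a * (q * Xi)) = Xi * (u * q - u ^+ 2) by rewrite uq; ring.
  rewrite -subr_ge0.
  have -> : q * (q * Xi / 4) - Xi * (u * q - u ^+ 2) = Xi * (q / 2 - u) ^+ 2 by field.
  by apply: mulr_ge0 => //; exact: sqr_ge0.
by rewrite ler_pM2l in h2.
Qed.

Lemma key_ineq1 (R : realType) (a b H B Xi u q : R) :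
  0 <= a -> a + b = 1 -> 0 <= b -> u ^+ 2 = a * q ^+ 2 -> 0 <= u -> 0 < q ->
  0 <= Xi -> H <= B -> a <= 1 -> a * H + b * B + u * Xi <= B + q * Xi.
Proof.
move=> a0 ab b0 uq u0 q0 X0 HB a1.
have -> : b = 1 - a by rewrite -ab addrC addKr.
have uq' : u <= q.
  have : u ^+ 2 <= q ^+ 2 by rewrite uq; nra.
  by rewrite ler_sqr // ?nnegrE // ltW.
nra.
Qed.
Lemma maxA_abs (R : realType) (A : finType) (f : A -> R) (b : R) :
  0 <= b -> (forall a, `|f a| <= b) -> `|Defs.maxA f| <= b.
Proof.
move=> b0 hf; rewrite /Defs.maxA; case: pickP => [a0 _|_]; last by rewrite normr0.
apply: (big_ind (fun y => `|y| <= b)) => //.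
by move=> x y hx hy; rewrite /Order.max; case: ifP.
Qed.

Lemma supnormV_le (R : realType) (X A : finType) (Q : X -> A -> R) (b : R) :
  0 <= b -> (forall o, `|VQ Q o| <= b) -> supnormV Q <= b.
Proof. by move=> b0 hb; apply: bigmax_le. Qed.

Lemma VQ_le (R : realType) (X A : finType) (Q : X -> A -> R) (b : R) :
  0 <= b -> (forall x a, `|Q x a| <= b) -> forall o, `|VQ Q o| <= 1 + b.
Proof.
move=> b0 hb [r x]; rewrite /VQ /=.
apply: (le_trans (ler_normD _ _)); apply: lerD; last exact: maxA_abs.
by case: r; rewrite ?normr1 ?normr0.
Qed.

Lemma sum_VQ_le (R : realType) (X A : finType) (Q : X -> A -> R) (M : R)
  (D : seq (outcome X)) :
  (forall o, `|VQ Q o| <= M) -> `|\sum_(o <- D) VQ Q o| <= (size D)%:R * M.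
Proof.
move=> hM; elim: D => [|o D IH]; first by rewrite big_nil normr0 mul0r.
rewrite big_cons /= -addn1 natrD mulrDl mul1r addrC.
apply: (le_trans (ler_normD _ _)); exact: lerD.
Qed.

Section det.
Variables (R : realType) (X A : finType) (H : nat) (lam v : R)
  (hist : seq (episode X A)) (xil : nat -> X -> A -> R) (Xi : R).
Hypotheses (lam0 : 0 < lam) (v0 : 0 < v) (H0 : (0 < H)%N) (Xi0 : 0 <= Xi)
  (hXi : forall t x a, (t < H)%N -> `|xil t x a| <= Xi).

Let c := Num.sqrt lam * Xi.
Let thb : nat -> X -> A -> R := fun _ _ _ => H%:R.

Lemma Fop_le t (Q : X -> A -> R) (B : R) : (t < H)%N -> H%:R <= B ->
  (forall o, `|VQ Q o| <= B) -> forall x a,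
  `|Fop lam v thb hist xil t Q x a| <= B + c /\
  (H%:R + c <= B -> `|Fop lam v thb hist xil t Q x a| <= B + c / 4).
Proof.
move=> tH HB hQ x a; rewrite /Fop /thb.
set D := Dset hist t x a; set n : R := (size D)%:R.
set s2 := (lam^-1 + n / v)^-1.
have n0 : 0 <= n by rewrite /n ler0n.
have den0 : 0 < lam^-1 + n / v.
  by rewrite ltr_wpDr // ?invr_gt0 // divr_ge0 // ltW.
have s20 : 0 < s2 by rewrite invr_gt0.
set a' := s2 / lam; set b' := s2 * n / v.
have ab : a' + b' = 1.
  rewrite /a' /b' /s2; field.
  by rewrite (gt_eqF v0) (gt_eqF lam0) /= gt_eqF // ltr_wpDr // mulr_ge0 // ltW.
have a0 : 0 <= a' by rewrite divr_ge0 // ltW.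
have b0 : 0 <= b' by apply: divr_ge0; [exact: mulr_ge0 (ltW s20) n0 | exact: ltW].
have a1 : a' <= 1 by rewrite -ab lerDl.
set u := Num.sqrt s2; set q := Num.sqrt lam.
have u0 : 0 <= u by exact: sqrtr_ge0.
have q0 : 0 < q by rewrite sqrtr_gt0.
have uq : u ^+ 2 = a' * q ^+ 2.
  by rewrite !sqr_sqrtr ?ltW // /a' divfK // gt_eqF.
have B0 : 0 <= B by apply: le_trans (ler0n _ _) HB.
have hsum := sum_VQ_le D hQ.
have hx := hXi x a tH.
have main : `|s2 * (H%:R / lam + v^-1 * \sum_(o <- D) VQ Q o) + u * xil t x a|
    <= a' * H%:R + b' * B + u * Xi.
  apply: (le_trans (ler_normD _ _)); apply: lerD; last first.
    by rewrite normrM ger0_norm // ler_wpM2l.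
  set S := \sum_(o <- D) VQ Q o.
  have e1 : s2 * (H%:R / lam + v^-1 * S) = a' * H%:R + (s2 / v) * S.
    by rewrite /a'; field; rewrite (gt_eqF v0) (gt_eqF lam0).
  rewrite e1; apply: (le_trans (ler_normD _ _)); apply: lerD.
    by rewrite normrM ger0_norm // ger0_norm.
  rewrite normrM (ger0_norm (divr_ge0 (ltW s20) (ltW v0))).
  have -> : b' * B = (s2 / v) * (n * B) by rewrite /b'; field; rewrite gt_eqF.
  by rewrite ler_wpM2l // (divr_ge0 (ltW s20) (ltW v0)).
split; first by apply: (le_trans main); exact: key_ineq1.
by move=> hB; apply: (le_trans main); exact: key_ineq.
Qed.

Let Qk k := Qrev H lam v thb hist xil k.

Let c0 : 0 <= c.
Proof. by rewrite mulr_ge0 // sqrtr_ge0. Qed.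

Lemma VQ_Qrev0 o : `|VQ (Qk 0) o| <= 1.
Proof.
have := @VQ_le R X A (Qk 0) 0 (lexx _) _ o; rewrite addr0; apply.
by move=> x a; rewrite /Qk /= normr0.
Qed.

Lemma VQ_Qrev_succ k : (k < H)%N ->
  forall o, `|VQ (Qk k.+1) o| <= H%:R + k.+1%:R + c * (k%:R + 4) / 4.
Proof.
elim: k => [|k IH] kH o.
  have hF := @Fop_le (H - 1) (Qk 0) H%:R _ (lexx _) _.
  have : `|VQ (Qk 1) o| <= 1 + (H%:R + c).
    apply: VQ_le; first by rewrite addr_ge0.
    move=> x a; apply: (hF _ _ x a).1.
      by rewrite subn1 prednK // ltnSn.
    move=> o'; apply: (le_trans (VQ_Qrev0 o')).
    by rewrite ler1n.
  move=> h; apply: (le_trans h).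
  have -> : c * ((0%N)%:R + 4) / 4 = c by rewrite add0r mulfK.
  lra.
have kH' : (k < H)%N by apply: ltn_trans kH.
have IHk := IH kH'.
set B := H%:R + k.+1%:R + c * (k%:R + 4) / 4.
have HB : H%:R <= B.
  rewrite /B -addrA lerDl addr_ge0 // divr_ge0 // mulr_ge0 // addr_ge0 //.
have HcB : H%:R + c <= B.
  rewrite /B -addrA lerD2l.
  have kk : 0 <= k%:R :> R by [].
  have ck := mulr_ge0 c0 kk.
  rewrite -natr1; lra.
have hF := @Fop_le (H - k.+2) (Qk k.+1) B _ HB IHk.
have : `|VQ (Qk k.+2) o| <= 1 + (B + c / 4).
  apply: VQ_le; first by rewrite addr_ge0 // ?divr_ge0 // (le_trans _ HB).
  move=> x a; apply: ((hF _ x a).2 HcB).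
  by rewrite ltn_subrL.
move=> h; apply: (le_trans h); rewrite /B -!natr1.
lra.
Qed.

Lemma supnorm_bound t : (t < H)%N ->
  supnormV (Qk (H - t.+1)) <=
  (if (H == 1)%N then 1 else 2 * H%:R - 1 + c * (H%:R + 2) / 4).
Proof.
move=> tH; case E : (H - t.+1)%N => [|k].
  apply: (@le_trans _ _ 1).
    by apply: supnormV_le => // o; exact: VQ_Qrev0.
  case: ifP => // H1.
  have H2 : (2 <= H)%N by move: H0 H1; case: H => [|[|]].
  have : 2%:R <= H%:R :> R by rewrite ler_nat.
  have : 0 <= c * (H%:R + 2) / 4 by rewrite divr_ge0 // mulr_ge0 // addr_ge0.
  lra.
have kH : (k < H)%N by lia.
have kH1 : (k.+1 <= H - 1)%N by lia.
have Hn1 : (H == 1)%N = false by apply/negbTE/eqP; lia.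
rewrite Hn1; apply: supnormV_le.
  have : 1 <= H%:R :> R by rewrite ler1n.
  have : 0 <= c * (H%:R + 2) / 4 by rewrite divr_ge0 // mulr_ge0 // addr_ge0.
  lra.
move=> o; apply: (le_trans (VQ_Qrev_succ kH o)).
have kR : k.+1%:R <= H%:R - 1 :> R.
  by rewrite -(ler_nat R) natrB ?(leq_trans _ kH1) // in kH1.
have : k%:R + 4 <= H%:R + 2 :> R by move: kR; rewrite -natr1; lra.
move=> h.
have : c * (k%:R + 4) / 4 <= c * (H%:R + 2) / 4.
  by rewrite ler_pM2r // ler_wpM2l.
lra.
Qed.
End det.
Lemma expmax (R : realType) (a b s : R) : 0 <= s ->
  expR (s * Num.max a b) <= expR (s * a) + expR (s * b).
Proof.
move=> s0; have p1 := expR_gt0 (s * a); have p2 := expR_gt0 (s * b).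
rewrite /Order.max; case: ifP => _; lra.
Qed.

Lemma exp_bigmax (R : realType) (I : finType) (f : I -> R) (s : R) : 0 <= s ->
  expR (s * \big[Num.max/0]_(i : I) `|f i|) <=
  1 + \sum_(i : I) (expR (s * f i) + expR ((- s) * f i)).
Proof.
move=> s0.
elim/big_rec2: _ => [|i y1 y2 _ IH]; first by rewrite mulr0 expR0 addr0.
have h1 : expR (s * `|f i|) <= expR (s * f i) + expR ((- s) * f i).
  have p1 := expR_gt0 (s * f i); have p2 := expR_gt0 ((- s) * f i).
  case: (ler0P (f i)) => hf.
    by rewrite mulrN -mulNr; lra.
  lra.
apply: (le_trans (expmax _ _ s0)).
have p1 := expR_gt0 (s * f i); have p2 := expR_gt0 ((- s) * f i).
lra.
Qed.

Lemma bigmax0_ge0 (R : realType) (I : Type) (r : seq I) (P : pred I) (f : I -> R) :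
  (forall i, P i -> 0 <= f i) -> 0 <= \big[Num.max/0]_(i <- r | P i) f i.
Proof.
move=> hf; apply: (big_ind (fun y => 0 <= y)) => // x y hx hy.
by rewrite /Order.max; case: ifP.
Qed.

Lemma mexp d (T : measurableType d) (R : realType) (f : T -> R) (s : R) :
  measurable_fun setT f -> measurable_fun setT (fun w => (expR (s * f w))%:E).
Proof.
move=> mf; apply/measurable_EFinP.
apply: (measurableT_comp (f := expR) (g := fun w => s * f w)); first exact: measurable_expR.
by apply: measurable_funM.
Qed.
Unset Implicit Arguments.
Theorem mainTheorem9
  (R : realType) (d : measure_display) (T : measurableType d)
  (P : probability T R)
  (X A : finType) (H : nat)
  (* MDP: time-dependent outcome law p t x a and initial-state law mu0 *)
  (p : nat -> X -> A -> outcome X -> R) (mu0 : X -> R)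
  (* RLSVI parameters *)
  (lam v : R)
  (* greedy action selection (arbitrary tie-breaking) *)
  (greedy : (A -> R) -> A)
  (* randomness: noise xi_{l,t,x,a}; environment outcomes Y_{l,t,x,a} drawn
     when (x,a) is played at period t of episode l; initial states X0_l *)
  (xi : nat -> nat -> X -> A -> T -> R)
  (Y : nat -> nat -> X -> A -> T -> outcome X)
  (X0 : nat -> T -> X)
  (L : nat) :
  (forall f a, f a <= f (greedy f)) ->
  0 < lam -> 0 < v ->
  v = (H%:R) ^+ 2 ->
  2 <= v / lam ->
  (* xi's are standard normal random variables *)
  (forall l t x a, measurable_fun setT (xi l t x a)) ->
  (forall l t x a (B : set R), measurable B ->
     P (xi l t x a @^-1` B) = normal_prob 0 1 B) ->
  (* environment laws *)
  (forall l t x a o, measurable [set w | Y l t x a w = o]) ->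
  (forall l t x a o, P [set w | Y l t x a w = o] = (p t x a o)%:E) ->
  (forall l s, measurable [set w | X0 l w = s]) ->
  (forall l s, P [set w | X0 l w = s] = (mu0 s)%:E) ->
  (* all of these random variables are mutually independent *)
  mutually_independent P
    (fun i : (nat * nat * X * A) + (nat * nat * X * A) + nat =>
       match i with
       | inl (inl j) => [set S | exists B : set R, measurable B /\
                           S = xi j.1.1.1 j.1.1.2 j.1.2 j.2 @^-1` B]
       | inl (inr j) => [set S | exists B : set (outcome X),
                           S = Y j.1.1.1 j.1.1.2 j.1.2 j.2 @^-1` B]
       | inr l => [set S | exists B : set X, S = X0 l @^-1` B]
       end) ->
  (\int[P]_w
     (\big[Num.max/0]_(1 <= l < L.+1) \big[Num.max/0]_(0 <= t < H)
        supnormV (RLSVI_Q H lam v (fun _ _ _ => H%:R) greedy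
                    (fun l' t' x a => xi l' t' x a w)
                    (fun l' t' x a => Y l' t' x a w)
                    (fun l' => X0 l' w) l t.+1))%:E
   <= (2 * H%:R + H%:R ^+ 2 * Num.sqrt (ln (1 + (#|X| * #|A| * H * L)%:R)))%:E)%E.
Proof.
move=> hgreedy lam0 v0 vH vlam mxi hxi _ _ _ _ _.
have H0 : (0 < H)%N.
  by case: H vH => // vH0; move: v0; rewrite vH0 expr0n /= ltxx.
pose xiI (i : 'I_L * 'I_H * X * A) w := xi (i.1.1.1).+1 i.1.1.2 i.1.2 i.2 w.
pose Xi w := \big[Num.max/0]_(i : 'I_L * 'I_H * X * A) `|xiI i w|.
have Xi0 w : 0 <= Xi w.
  apply: (big_ind (fun y => 0 <= y)) => // x y hx hy.
  by rewrite /Order.max; case: ifP.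
have hXi w l t x a : (0 < l)%N -> (l <= L)%N -> (t < H)%N ->
    `|xi l t x a w| <= Xi w.
  move=> l0 lL tH.
  have lL' : (l.-1 < L)%N by rewrite prednK.
  have := le_bigmax 0 (fun i => `|xiI i w|) (Ordinal lL', Ordinal tH, x, a).
  by rewrite /xiI /= prednK.
pose BB z := if (H == 1)%N then 1 else 2 * H%:R - 1 + Num.sqrt lam * z * (H%:R + 2) / 4.
have BB0 z : 0 <= z -> 0 <= BB z.
  move=> z0; rewrite /BB; case: ifP => // _.
  have : 1 <= H%:R :> R by rewrite ler1n.
  have : 0 <= Num.sqrt lam * z * (H%:R + 2) / 4.
    by rewrite divr_ge0 // mulr_ge0 // ?mulr_ge0 ?sqrtr_ge0 // addr_ge0.
  lra.
pose F w := \big[Num.max/0]_(1 <= l < L.+1) \big[Num.max/0]_(0 <= t < H)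
        supnormV (RLSVI_Q H lam v (fun _ _ _ => H%:R) greedy
                    (fun l' t' x a => xi l' t' x a w)
                    (fun l' t' x a => Y l' t' x a w)
                    (fun l' => X0 l' w) l t.+1).
have hpt w : F w <= BB (Xi w).
  rewrite /F big_nat_cond; apply: bigmax_le; first exact: BB0.
  move=> l /andP[/andP[l1 lL] _].
  rewrite big_nat_cond; apply: bigmax_le; first exact: BB0.
  move=> t /andP[/andP[_ tH] _].
  rewrite /RLSVI_Q /Qfun.
  apply: (@supnorm_bound R X A H lam v _ (fun t' x a => xi l t' x a w) (Xi w)) => //.
  by move=> t' x a t'H; apply: hXi.
have F0 w : 0 <= F w.
  apply: bigmax0_ge0 => l _; apply: bigmax0_ge0 => t _.
  by apply: bigmax0_ge0 => o _.
set N := #|{: 'I_L * 'I_H * X * A}|.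
have hN : (#|X| * #|A| * H * L)%N = N.
  by rewrite /N !card_prod !card_ord; lia.
rewrite hN.
have vlam2 : 2 * lam <= v by rewrite ler_pdivlMr // in vlam.
have hsq0 : 0 <= Num.sqrt (ln (1 + N%:R)) :> R by exact: sqrtr_ge0.
have mF : forall w, (0 <= (F w)%:E)%E by move=> w; rewrite lee_fin.
have [easy|hard] := boolP ((H == 1)%N || (N == 0)%N).
  apply: (@le_trans _ _ (\int[P]_w (cst (2 * H%:R - 1)%:E) w)%E).
    apply: le_integral_nm => // w; rewrite lee_fin /=.
    apply: (le_trans (hpt w)); rewrite /BB.
    case: ifP => [/eqP ->|H1]; first by rewrite /=; lra.
    move: easy; rewrite H1 /= => /eqP N0.
    have -> : Xi w = 0.
      apply/eqP; rewrite eq_le Xi0 andbT; apply: bigmax_le => // i _.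
      by move: N0; rewrite /N (cardD1 i) inE.
    by rewrite mulr0 mul0r mul0r addr0.
  rewrite integral_cst //= (probability_setT P) mule1 lee_fin.
  have : 0 <= H%:R ^+ 2 * Num.sqrt (ln (1 + N%:R)) :> R by rewrite mulr_ge0 // sqr_ge0.
  lra.
move: hard; rewrite negb_or => /andP[H1 N0].
have h2 : 2 <= H%:R :> R.
  by rewrite (ler_nat R 2 H); lia.
have N1 : 1 <= N%:R :> R by rewrite ler1n lt0n.
set h := H%:R in h2 vH hpt *.
have lamh : lam <= h ^+ 2 / 2 by rewrite -vH; lra.
set q := Num.sqrt lam.
have q0 : 0 < q by rewrite sqrtr_gt0.
have qh : q <= h.
  have : q ^+ 2 <= h ^+ 2 by rewrite sqr_sqrtr ?ltW //; nra.
  nra.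
set y := 1 + N%:R.
have y2 : 2 <= y by rewrite /y; lra.
set l := ln y.
have ly : expR l = y by rewrite lnK // posrE; lra.
have l14 : 1 / 4 <= l.
  rewrite -ler_expR ly.
  have e := expR_ge1Dx (- (1 / 4) : R).
  have e2 : expR (1 / 4) * expR (- (1 / 4)) = 1 :> R by rewrite -expRD subrr expR0.
  have := expR_gt0 (1 / 4 : R); nra.
set sl := Num.sqrt l.
have sl0 : 0 < sl by rewrite sqrtr_gt0; lra.
have sl2 : sl ^+ 2 = l by rewrite sqr_sqrtr //; lra.
set s := 2 * sl.
have s0 : 0 < s by rewrite /s; lra.
set k := q * (h + 2) / 4.
have k0 : 0 <= k by rewrite /k divr_ge0 // mulr_ge0 ?ltW //; lra.
set a := k / s.
have a0 : 0 <= a by rewrite /a divr_ge0 // ltW.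
have y4 : 0 < y ^+ 4 by rewrite exprn_gt0 //; lra.
set K := a / y ^+ 4.
have K0 : 0 <= K by rewrite /K divr_ge0 // ltW.
set C0 := 2 * h - 1 + a * (4 * l - 1).
have C00 : 0 <= C0 + K.
  have : 0 <= a * (4 * l - 1) by rewrite mulr_ge0 //; lra.
  rewrite /C0; lra.
pose G w := ((C0 + K)%:E + K%:E * \sum_(i : 'I_L * 'I_H * X * A)
   ((expR (s * xiI i w))%:E + (expR ((- s) * xiI i w))%:E))%E.
have hG w : ((F w)%:E <= G w)%E.
  rewrite /G.
  under eq_bigr do rewrite -EFinD.
  rewrite sumEFin -EFinM -EFinD lee_fin.
  set S := \sum_(i : _) _.
  have hS : expR (s * Xi w) <= 1 + S := exp_bigmax _ (ltW s0).
  have e1 := expR_ge1Dx (s * Xi w - 4 * l).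
  have e2 : expR (s * Xi w - 4 * l) = expR (s * Xi w) / y ^+ 4.
    by rewrite expRD expRN (expRM_natl 4) ly.
  have hB := hpt w; rewrite /BB (negbTE H1) -/q in hB.
  have t0 : expR (s * Xi w) / y ^+ 4 <= (1 + S) / y ^+ 4.
    by rewrite ler_pM2r ?invr_gt0.
  have t1 : s * Xi w <= (1 + S) / y ^+ 4 + (4 * l - 1) by lra.
  have t2 : a * (s * Xi w) <= a * ((1 + S) / y ^+ 4 + (4 * l - 1)) := ler_wpM2l a0 t1.
  have t3 : q * Xi w * (h + 2) / 4 = a * (s * Xi w).
    by rewrite /a /k; field; rewrite gt_eqF.
  have t4 : a * ((1 + S) / y ^+ 4 + (4 * l - 1)) = K + K * S + a * (4 * l - 1).
    by rewrite /K; field; rewrite gt_eqF //; lra.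
  rewrite /C0; lra.
apply: (le_trans (le_integral_nm _ mF hG)).
have mxiI i : measurable_fun setT (xiI i) by exact: mxi.
have mE i : measurable_fun setT (fun w => ((expR (s * xiI i w))%:E +
    (expR ((- s) * xiI i w))%:E)%E).
  by apply: emeasurable_funD; exact: mexp.
have E0 i w : (0 <= (expR (s * xiI i w))%:E + (expR ((- s) * xiI i w))%:E)%E.
  by rewrite adde_ge0 // lee_fin expR_ge0.
rewrite /G ge0_integralD //; last 2 first.
- by move=> w _; rewrite mule_ge0 ?lee_fin // sume_ge0.
- by apply: emeasurable_funM => //; exact: emeasurable_sum.
rewrite integral_cst //= (probability_setT P) mule1.
set c := expR (s ^+ 2 / 2).
have -> : (\int[P]_x (K%:E * (\sum_(i : 'I_L * 'I_H * X * A)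
      ((expR (s * xiI i x))%:E + (expR ((- s) * xiI i x))%:E)))
    = K%:E * \sum_(i : 'I_L * 'I_H * X * A) (c%:E + c%:E))%E.
  have mS : measurable_fun setT (fun x => \sum_(i : 'I_L * 'I_H * X * A)
      ((expR (s * xiI i x))%:E + (expR ((- s) * xiI i x))%:E))%E.
    exact: emeasurable_sum.
  have S0 : forall x, setT x -> (0 <= \sum_(i : 'I_L * 'I_H * X * A)
      ((expR (s * xiI i x))%:E + (expR ((- s) * xiI i x))%:E))%E.
    by move=> w _; rewrite sume_ge0.
  rewrite ge0_integralZl //.
  rewrite ge0_integral_sum //; congr (_ * _)%E; apply: eq_bigr => i _.
  have m1 := mexp s (mxiI i); have m2 := mexp (- s) (mxiI i).
  have p1 : forall w, setT w -> (0 <= (expR (s * xiI i w))%:E)%E.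
    by move=> w _; rewrite lee_fin expR_ge0.
  have p2 : forall w, setT w -> (0 <= (expR ((- s) * xiI i w))%:E)%E.
    by move=> w _; rewrite lee_fin expR_ge0.
  rewrite ge0_integralD //.
  by rewrite !(mgf_rv (mxiI i) (hxi _ _ _ _)) sqrrN.
under eq_bigr do rewrite -EFinD.
rewrite sumEFin -EFinM -EFinD lee_fin sumr_const -/N.
have ec : c = y ^+ 2.
  rewrite /c (_ : s ^+ 2 / 2 = 2%:R * l) ?expRM_natl ?ly //.
  by rewrite /s exprMn sl2; field.
rewrite ec -[(_ + _) *+ N]mulr_natr.
have yN : y = 1 + N%:R by [].
have p1 : 1 + N%:R * (y ^+ 2 + y ^+ 2) <= y ^+ 4.
  have y1 : 1 <= y ^+ 2 by nra.
  rewrite yN; nra.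
have p2 : K * (1 + N%:R * (y ^+ 2 + y ^+ 2)) <= a.
  rewrite /K mulrAC -mulrA.
  rewrite -[X in _ <= X]mulr1 ler_wpM2l //.
  by rewrite ler_pdivrMr // mul1r.
have p3 : a * (4 * l) = 2 * k * sl.
  by rewrite /a /s -sl2; field; rewrite gt_eqF.
have p4 : 2 * k <= h ^+ 2 by rewrite /k; nra.
have p5 : 2 * k * sl <= h ^+ 2 * sl by rewrite ler_pM2r.
rewrite /C0.
have -> : K * ((y ^+ 2 + y ^+ 2) * N%:R) = K * (1 + N%:R * (y ^+ 2 + y ^+ 2)) - K.
  by ring.
lra.
Qed.
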